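(* Let $G=(\mathcal V,\mathcal E)$ satisfy the Neighborhood Overlap property with parameter $p\in(0,1]$. Let $\{X_t\}_{t\in\mathbb N}$ be the trajectory generated under the Water-Filling Strategy $\psi^{wf}$ on $G$, let $N_t=\sum_{i=1}^t\mathbb I(X_i\in\mathcal N(D))$, $U_0=0$, $U_i=\sup\{t\ge1:N_t<i\}$ and $Y_i=U_i-U_{i-1}$ for $i\ge1$. Then $\mathbb E(Y_i)\le1/p$ for every $i\ge1$.
   Context: Model: finite connected undirected graph, neighborhoods $\mathcal N(v)$; goal $D$ uniform on $\mathcal V$; $B_t$ i.i.d. Bernoulli$(1-\varepsilon)$, $\varepsilon\in[0,1)$. The agent in state $X_t$ chooses $a_t\in\mathcal N(X_t)$; if $B_t=1$, $X_{t+1}=a_t$, else $X_{t+1}$ uniform on $\mathcal N(X_t)$. Random-Step: $a_t$ uniform on $\mathcal N(X_t)$; Goal-Attempt: $a_t=D$. $T_{IH}=\inf\{t\ge1:$ Goal-Attempt at $t-1$ and $B_{t-1}=1\}$. Water-Filling Strategy with target risk $\bar q$: $t^*=\lceil1/\bar q-\varepsilon/(1-\varepsilon)\rceil$, $p_t=\frac{\bar q}{1-\varepsilon}(1-t\bar q)^{-1}$ for $0\le t<t^*-1$, else $1$; if $X_t\in\mathcal N(D)$ and $T_{IH}>t$, Goal-Attempt with probability $p_{N_t}$, else Random-Step; otherwise Random-Step. Neighborhood Overlap property with parameter $p$: for all $u,v$, $|\mathcal N(u)\cap\mathcal N(v)|/|\mathcal N(v)|\ge p$. *)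

(* Defs.v *)
From HB Require Import structures.
From mathcomp Require Import all_boot all_order all_algebra.
From mathcomp Require Import all_classical all_reals all_analysis.
Set Implicit Arguments. Unset Strict Implicit. Unset Printing Implicit Defensive.
Import Order.TTheory GRing.Theory Num.Theory.
Local Open Scope ring_scope.

Definition nbhd_adj (V : finType) (N : V -> {set V}) : rel V :=
  fun u v => v \in N u.

Definition neighborhood_overlap (R : realType) (V : finType)
  (N : V -> {set V}) (p : R) : Prop :=
  forall u v : V, p <= #|N u :&: N v|%:R / #|N v|%:R.

Definition wf_tstar (R : realType) (qbar eps : R) : int :=
  Num.ceil (qbar^-1 - eps / (1 - eps)).

Definition wf_p (R : realType) (qbar eps : R) (t : nat) : R :=
  if (t%:Z + 1 < wf_tstar qbar eps)%R
  then qbar / (1 - eps) * (1 - t%:R * qbar)^-1 else 1.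

Definition nvisits (V : finType) (N : V -> {set V}) (x : nat -> V) (d : V)
  (t : nat) : nat :=
  (\sum_(1 <= i < t.+1) (x i \in N d))%N.

(* T_IH > t  iff  no s < t with a Goal-Attempt at s and B_s = 1. *)
Definition not_home (a b : nat -> bool) (t : nat) : bool :=
  ~~ [exists s : 'I_t, a s && b s].

(* Probability weight of one transition t -> t+1 of the (D, X, A, B) process
   under the Water-Filling Strategy: A_t = Goal-Attempt indicator,
   B_t ~ Bernoulli(1-eps), X_{t+1} = D if A_t && B_t, else uniform on N(X_t). *)
Definition wf_step_weight (R : realType) (V : finType) (N : V -> {set V})
  (eps qbar : R) (d : V) (x : nat -> V) (a b : nat -> bool) (t : nat) : R :=
  let wA := if (x t \in N d) && not_home a b t
            then (if a t then wf_p qbar eps (nvisits N x d t)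
                  else 1 - wf_p qbar eps (nvisits N x d t))
            else (if a t then 0 else 1) in
  let wB := if b t then 1 - eps else eps in
  let wX := if a t && b t then (x t.+1 == d)%:R
            else (x t.+1 \in N (x t))%:R / #|N (x t)|%:R in
  wA * wB * wX.

(* Probability that D = d, X_0..X_n = x_0..x_n, A_t = a_t, B_t = b_t (t < n),
   with D uniform on V and X_0 = x0. *)
Definition wf_path_weight (R : realType) (V : finType) (N : V -> {set V})
  (eps qbar : R) (x0 : V) (d : V) (x : nat -> V) (a b : nat -> bool)
  (n : nat) : R :=
  #|V|%:R^-1 * (x 0 == x0)%:R * \prod_(t < n) wf_step_weight N eps qbar d x a b t.

Local Open Scope ereal_scope.

(* U_0 = 0, U_i = sup{t >= 1 : N_t < i} (with sup of the empty set := 0,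
   realized by also allowing t = 0, where N_0 = 0 < i). *)
Definition wf_U (R : realType) (V : finType) (N : V -> {set V})
  (x : nat -> V) (d : V) (i : nat) : \bar R :=
  if i == 0%N then 0
  else ereal_sup [set (t%:R)%:E | t in [set t : nat | (nvisits N x d t < i)%N]].

(* Y_i = U_i - U_{i-1}; convention (+oo) - (+oo) := +oo. *)
Definition wf_Y (R : realType) (V : finType) (N : V -> {set V})
  (x : nat -> V) (d : V) (i : nat) : \bar R :=
  if wf_U R N x d i.-1 == +oo then +oo
  else wf_U R N x d i - wf_U R N x d i.-1.

(* Main.v *)
Require Import Defs.
From HB Require Import structures.
From mathcomp Require Import all_boot all_order all_algebra.
From mathcomp Require Import all_classical all_reals all_analysis.
From mathcomp Require Import lra.
Import Order.TTheory GRing.Theory Num.Theory.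
Local Open Scope ring_scope.
Local Open Scope classical_set_scope.


Section Det.
Variables (R : realType) (V : finType) (N : V -> {set V}).

Lemma nv0 x d : nvisits N x d 0 = 0%N.
Proof. by rewrite /nvisits big_geq. Qed.

Lemma nvS x d t : nvisits N x d t.+1 = (nvisits N x d t + (x t.+1 \in N d))%N.
Proof. by rewrite /nvisits big_nat_recr. Qed.

Lemma nv_mono x d : {homo nvisits N x d : m n / (m <= n)%N}.
Proof.
apply: homo_leq => //; first exact: leq_trans.
by move=> i; rewrite nvS leq_addr.
Qed.

Lemma nv_congr x y d s : (forall t, (t <= s)%N -> x t = y t) ->
  nvisits N x d s = nvisits N y d s.
Proof.
move=> h; rewrite /nvisits; apply: eq_big_nat => t /andP[_ ts].
by rewrite h.
Qed.

Local Open Scope ereal_scope.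

Lemma series_ge1 (g : nat -> \bar R) : (forall s, 1 <= g s) ->
  \sum_(s <oo) g s = +oo.
Proof.
move=> g1.
have g0 s : 0 <= g s by apply: le_trans (g1 s).
have H M : (M%:R)%:E <= \sum_(s <oo) g s.
  apply: le_trans (nneseries_lim_ge M _); last by move=> n _ _; exact: g0.
  have H1 : \sum_(0 <= s < M) ((1%R : R)%:E) <= \sum_(0 <= s < M) g s.
    by apply: lee_sum => s _; exact: g1.
  apply: le_trans H1.
  by rewrite sumEFin sumr_const_nat subn0 lee_fin.
move: H; case: (\sum_(s <oo) g s) => [r| |] H //.
- have r0 : (0 <= `|r|)%R by [].
  have := archi_boundP r0; set M := Num.Def.archi_bound _ => hM.
  have := H M; rewrite lee_fin => hr.
  have : (`|r| < `|r|)%R.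
    by apply: lt_le_trans hM _; apply: le_trans hr (ler_norm _).
  by rewrite ltxx.
- by have := H 0%N.
Qed.

Lemma U_fin {x d j} : (exists s0, (j <= nvisits N x d s0)%N) ->
  exists u : R, wf_U R N x d j = u%:E /\ (0 <= u)%R /\
    forall t, (nvisits N x d t < j)%N -> (t%:R <= u)%R.
Proof.
move=> [s0 hs0]; rewrite /wf_U; case: eqP => [->|/eqP j0].
  by exists 0%R; split => //; split => // t.
set S := [set _ | _ in _].
have S0 : S 0%R%:E by exists 0%N => //=; rewrite nv0 lt0n.
have Sub : ereal_sup S <= (s0%:R)%:E.
  apply: ge_ereal_sup => _ [t /= ht <-]; rewrite lee_fin ler_nat.
  apply: ltnW; rewrite ltnNge; apply/negP => st.
  have := @nv_mono x d _ _ st; rewrite leqNgt => /negP; apply.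
  exact: leq_trans ht hs0.
have Slb : 0 <= ereal_sup S by apply: ereal_sup_ubound.
have fS : ereal_sup S \is a fin_num.
  by rewrite ge0_fin_numE // (le_lt_trans Sub) // ltry.
exists (fine (ereal_sup S)); rewrite fineK //; split => //; split.
  by rewrite -lee_fin fineK.
move=> t ht; rewrite -lee_fin fineK //; apply: ereal_sup_ubound.
by exists t.
Qed.

Lemma Y_le x d i (g : nat -> \bar R) : (1 <= i)%N ->
  (forall s, 0 <= g s) ->
  (forall s, nvisits N x d s = i.-1 -> 1 <= g s) ->
  ((forall s, (nvisits N x d s < i.-1)%N) -> forall s, 1 <= g s) ->
  wf_Y R N x d i <= \sum_(s <oo) g s.
Proof.
move=> i1 g0 gj gZ.
have [Z|nZ] := pselect (forall s, (nvisits N x d s < i.-1)%N).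
  by rewrite series_ge1 ?leey // => s; exact: gZ.
have ex : exists s0, (i.-1 <= nvisits N x d s0)%N.
  apply: contra_notP nZ => /forallNP h s.
  by rewrite ltnNge; apply/negP => /(fun z => h s z).
have [u [Uu [u0 ub]]] := U_fin ex.
rewrite /wf_Y Uu /= EFinN leeBlDr //.
rewrite /wf_U; have -> : (i == 0%N) = false by case: i i1 {gj gZ nZ ex Uu ub}.
apply: ge_ereal_sup => _ [t /= ht <-].
pose c m := (\sum_(0 <= s < m) ((nvisits N x d s == i.-1)%:R : R))%R.
have Q : forall t, (nvisits N x d t <= i.-1)%N -> (t%:R <= c t.+1 + u)%R.
  elim=> [|k IH] h.
    by rewrite /c big_nat1 nv0; apply: addr_ge0 => //; case: eqP.
  have ht' : (nvisits N x d k <= i.-1)%N.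
    by apply: leq_trans h; apply: nv_mono; exact: leqnSn.
  have IH' := IH ht'; rewrite /c big_nat_recr //= -/(c k.+1).
  move: h; rewrite leq_eqVlt => /orP[/eqP->|hlt].
    by rewrite eqxx -natr1 addrAC lerD2r.
  have := ub _ hlt => tu.
  apply: le_trans tu _; rewrite -{1}(add0r u) lerD2r.
  apply: addr_ge0; last by case: eqP.
  by apply: sumr_ge0 => s _; case: eqP.
have ht2 : (nvisits N x d t <= i.-1)%N by rewrite -ltnS prednK.
apply: le_trans (_ : (c t.+1)%:E + u%:E <= _); first by rewrite -EFinD lee_fin Q.
rewrite leeD2r //.
apply: le_trans (nneseries_lim_ge t.+1 _); last by move=> n _ _; exact: g0.
rewrite /c -sumEFin; apply: lee_sum => s _.
by case: eqP => [/gj //|_]; exact: g0.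
Qed.

End Det.

Section Prob.
Variables (R : realType) (V : finType) (N : V -> {set V})
  (p eps qbar : R) (x0 : V)
  (dO : measure_display) (O : measurableType dO) (P : probability O R)
  (D : O -> V) (X : nat -> O -> V) (A B : nat -> O -> bool).
Hypothesis mD : forall v, measurable (D @^-1` [set v]%classic).
Hypothesis mX : forall t v, measurable (X t @^-1` [set v]%classic).
Hypothesis mA : forall t c, measurable (A t @^-1` [set c]%classic).
Hypothesis mB : forall t c, measurable (B t @^-1` [set c]%classic).

Definition cyl n d (x : nat -> V) (a b : nat -> bool) : set O :=
  [set w : O | D w = d /\ (forall t, (t <= n)%N -> X t w = x t) /\
                (forall t, (t < n)%N -> A t w = a t /\ B t w = b t)].

Lemma mcyl n d x a b : measurable (cyl n d x a b).
Proof.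
have mXs : forall m, measurable [set w | forall t, (t <= m)%N -> X t w = x t].
  elim=> [|m IH].
    have -> : [set w | forall t, (t <= 0)%N -> X t w = x t] = X 0 @^-1` [set x 0%N].
      apply/seteqP; split => w /=; first by apply.
      by move=> h t; rewrite leqn0 => /eqP ->.
    exact: mX.
  have -> : [set w | forall t, (t <= m.+1)%N -> X t w = x t] =
    [set w | forall t, (t <= m)%N -> X t w = x t] `&` X m.+1 @^-1` [set x m.+1].
    apply/seteqP; split => w /=.
      by move=> h; split => [t tn|]; apply: h => //; apply: leqW.
    move=> [h1 h2] t; rewrite leq_eqVlt => /orP[/eqP->//|]; rewrite ltnS.
    exact: h1.
  exact: measurableI.
have mABs : forall m, measurable [set w | forall t, (t < m)%N -> A t w = a t /\ B t w = b t].
  elim=> [|m IH].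
    have -> : [set w | forall t, (t < 0)%N -> A t w = a t /\ B t w = b t] = setT.
      by apply/seteqP; split => w //=.
    exact: measurableT.
  have -> : [set w | forall t, (t < m.+1)%N -> A t w = a t /\ B t w = b t] =
    [set w | forall t, (t < m)%N -> A t w = a t /\ B t w = b t] `&`
      (A m @^-1` [set a m] `&` B m @^-1` [set b m]).
    apply/seteqP; split => w /=.
      by move=> h; split => [t tn|]; [apply: h; apply: ltnW|apply: h].
    move=> [h1 [h2 h3]] t; rewrite ltnS leq_eqVlt => /orP[/eqP->//|].
    exact: h1.
  by apply: measurableI => //; apply: measurableI.
have -> : cyl n d x a b = D @^-1` [set d] `&`
   ([set w | forall t, (t <= n)%N -> X t w = x t] `&`
    [set w | forall t, (t < n)%N -> A t w = a t /\ B t w = b t]).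
  by apply/seteqP; split => w /= [h1 [h2 h3]].
by apply: measurableI => //; apply: measurableI.
Qed.

Lemma memU (I : eqType) (r : seq I) (Pr : pred I) (F : I -> set O) w :
  (\big[setU/set0]_(i <- r | Pr i) F i) w <-> exists i, [/\ i \in r, Pr i & F i w].
Proof.
elim: r => [|i r IH]; first by rewrite big_nil; split => // -[i []].
rewrite big_cons; case: ifP => Pi.
  split.
    by case=> [Fi|/IH [j [jr Pj Fj]]]; [exists i; rewrite inE eqxx|exists j; rewrite inE jr orbT].
  move=> [j [jr Pj Fj]]; move: jr; rewrite inE => /orP[/eqP ji|jr].
    by left; rewrite -ji.
  by right; apply/IH; exists j.
split; first by move/IH => [j [jr Pj Fj]]; exists j; rewrite inE jr orbT.
move=> [j [jr Pj Fj]]; apply/IH; exists j; split => //.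
by move: jr; rewrite inE => /orP[/eqP ji|//]; rewrite ji Pi in Pj.
Qed.

Local Open Scope ereal_scope.

Lemma fadd (I : eqType) (r : seq I) (Pr : pred I) (F : I -> set O) :
  uniq r -> (forall i, measurable (F i)) ->
  (forall i j, i != j -> F i `&` F j = set0) ->
  measurable (\big[setU/set0]_(i <- r | Pr i) F i) /\
  P (\big[setU/set0]_(i <- r | Pr i) F i) = \sum_(i <- r | Pr i) P (F i).
Proof.
move=> + mF dF; elim: r => [|i r IH]; first by rewrite !big_nil.
rewrite /= => /andP[ir ur]; have [mU PU] := IH ur.
rewrite !big_cons; case: ifP => Pi //.
split; first exact: measurableU.
rewrite measureU //; first by congr (_ + _).
apply/seteqP; split => // w [Fi /memU [j [jr Pj Fj]]].
have ij : i != j by apply: contraNneq ir => ->.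
by have := dF _ _ ij; rewrite -subset0 => /(_ w); apply.
Qed.

Local Close Scope ereal_scope.

Definition Ob n := (V * {ffun 'I_n.+1 -> V} * {ffun 'I_n -> bool} * {ffun 'I_n -> bool})%type.
Definition od n (o : Ob n) : V := o.1.1.1.
Definition ox n (o : Ob n) : nat -> V :=
  fun t => oapp (fun i : 'I_n.+1 => o.1.1.2 i) x0 (insub t).
Definition oa n (o : Ob n) : nat -> bool :=
  fun t => oapp (fun i : 'I_n => o.1.2 i) false (insub t).
Definition ob n (o : Ob n) : nat -> bool :=
  fun t => oapp (fun i : 'I_n => o.2 i) false (insub t).
Definition obs n w : Ob n :=
  (D w, [ffun i : 'I_n.+1 => X i w], [ffun i : 'I_n => A i w], [ffun i : 'I_n => B i w]).
Arguments od {n}. Arguments ox {n}. Arguments oa {n}. Arguments ob {n}.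
Definition ocyl n (o : Ob n) := cyl n (od o) (ox o) (oa o) (ob o).
Arguments ocyl {n}.

Lemma oappS m (T : Type) (f : 'I_m -> T) d t (h : (t < m)%N) :
  oapp f d (insub t) = f (Ordinal h).
Proof. by rewrite insubT. Qed.
Arguments oappS {m T} f d {t} h.

Lemma oappV m (T : Type) (f : 'I_m -> T) d (i : 'I_m) :
  oapp f d (insub (nat_of_ord i)) = f i.
Proof. by rewrite valK. Qed.
Arguments oappV {m T} f d i.

Lemma obs_in n w : ocyl (obs n w) w.
Proof.
split => //; split => t ht.
  by rewrite /ox (oappS _ _ (ht : (t < n.+1)%N)) ffunE.
by rewrite /oa /ob !(oappS _ _ ht) !ffunE.
Qed.

Lemma cyl_obs n (o : Ob n) w : ocyl o w -> o = obs n w.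
Proof.
case: o => [[[d fx] fa] fb] [/= hd [hx hab]].
rewrite /obs hd; congr (_, _, _, _); apply/ffunP => i; rewrite ffunE.
- by rewrite (hx i (ltn_ord i)) /ox oappV.
- by have [-> _] := hab i (ltn_ord i); rewrite /oa oappV.
- by have [_ ->] := hab i (ltn_ord i); rewrite /ob oappV.
Qed.

Arguments cyl_obs {n o w}.

Lemma part n (Q : V -> (nat -> V) -> bool) (G : set O) :
  (forall d x y, (forall t, (t <= n)%N -> x t = y t) -> Q d x = Q d y) ->
  [set w | Q (D w) (fun t => X t w)] `&` G =
  \big[setU/set0]_(o <- index_enum (Ob n) | Q (od o) (ox o)) (ocyl o `&` G).
Proof.
move=> Qc; apply/seteqP; split => w.
  move=> [/= hQ hG]; apply/memU; exists (obs n w); split => //.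
    by rewrite mem_index_enum.
  have [_ [hx _]] := obs_in n w.
  have -> : Q (od (obs n w)) (ox (obs n w)) = Q (D w) (fun t => X t w).
    by apply: Qc => t ht; rewrite hx.
    exact: hQ.
  by split => //; exact: obs_in.
move/memU => [] o [] _ Qo [] [] hd [] hx _ hG; split => //=.
rewrite hd; move: Qo; rewrite (Qc _ _ (fun t => X t w)) //.
by move=> t ht; rewrite hx.
Qed.

Local Open Scope ereal_scope.

Lemma PQ n (Q : V -> (nat -> V) -> bool) (G : set O) :
  (forall d x y, (forall t, (t <= n)%N -> x t = y t) -> Q d x = Q d y) ->
  measurable G ->
  measurable ([set w | Q (D w) (fun t => X t w)] `&` G) /\
  P ([set w | Q (D w) (fun t => X t w)] `&` G) =
  \sum_(o <- index_enum (Ob n) | Q (od o) (ox o)) P (ocyl o `&` G).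
Proof.
move=> Qc mG; rewrite (@part n) //; apply: fadd.
- exact: index_enum_uniq.
- by move=> o; apply: measurableI => //; exact: mcyl.
- move=> o o' oo'; apply/seteqP; split => // w [[c1 _] [c2 _]].
  by move: oo'; rewrite (cyl_obs c1) (cyl_obs c2) eqxx.
Qed.

End Prob.

Section W.
Variables (R : realType) (V : finType) (N : V -> {set V}) (p eps qbar : R) (x0 : V).
Hypothesis heps : 0 <= eps < 1.
Hypothesis hq : 0 < qbar.

Lemma wfp_ge0 t : 0 <= wf_p qbar eps t.
Proof.
rewrite /wf_p; case: ifP => // h.
have e1 : 0 < 1 - eps by case/andP: heps => _; rewrite subr_gt0.
apply: mulr_ge0; first by apply: divr_ge0; [exact: ltW|exact: ltW].
rewrite invr_ge0.
move: h; rewrite /wf_tstar ceil_gt_int => h.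
have h1 : ((t%:Z + 1)%:~R : R) < qbar^-1.
  apply: lt_le_trans h _; rewrite lerBlDr lerDl.
  by apply: divr_ge0; [case/andP: heps|exact: ltW].
have h2 : (t%:R + 1) * qbar < 1.
  by rewrite -ltr_pdivlMr // div1r; move: h1; rewrite intrD.
have h3 : t%:R * qbar <= (t%:R + 1) * qbar by rewrite mulrDl lerDl mul1r ltW.
by rewrite subr_ge0; apply: le_trans h3 (ltW h2).
Qed.

Lemma step_congr d x y a a' b b' t :
  (forall k, (k <= t.+1)%N -> x k = y k) ->
  (forall k, (k <= t)%N -> a k = a' k /\ b k = b' k) ->
  wf_step_weight N eps qbar d x a b t = wf_step_weight N eps qbar d y a' b' t.
Proof.
move=> hx hab.
have nh : not_home a b t = not_home a' b' t.
  rewrite /not_home; congr (~~ _); apply: eq_existsb => k.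
  by have [-> ->] := hab k (ltnW (ltn_ord k)).
have nv : nvisits N x d t = nvisits N y d t.
  by apply: nv_congr => k kt; apply: hx; apply: leqW.
rewrite /wf_step_weight nh nv (hx t (leqnSn t)) (hx t.+1 (leqnn _)).
by have [-> ->] := hab t (leqnn t).
Qed.

Definition xe (x : nat -> V) s v t := if t == s.+1 then v else x t.
Definition ae (a : nat -> bool) s c t := if t == s then c else a t.

Lemma pw_ext d x a b s v c1 c2 :
  wf_path_weight N eps qbar x0 d (xe x s v) (ae a s c1) (ae b s c2) s.+1 =
  wf_path_weight N eps qbar x0 d x a b s *
  wf_step_weight N eps qbar d (xe x s v) (ae a s c1) (ae b s c2) s.
Proof.
rewrite /wf_path_weight big_ord_recr /= mulrA; congr (_ * _).
congr (_ * _ * _).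
apply: eq_bigr => i _; apply: step_congr.
  move=> k ki; rewrite /xe; case: eqP => // ks.
  by move: ki; rewrite ks => si; have := ltn_ord i; rewrite -ltnS ltnNge si.
move=> k ki; rewrite /ae; case: eqP => // ks.
by move: ki; rewrite ks => si; have := ltn_ord i; rewrite ltnNge si.
Qed.


Hypothesis Nrefl : forall v, v \in N v.
Hypothesis hov : neighborhood_overlap N p.

Lemma r_le1 d u : \sum_(v | v \notin N d) ((v \in N u)%:R / #|N u|%:R : R) <= 1 - p.
Proof.
have cu : (0 < #|N u|)%N by apply/card_gt0P; exists u.
have cu' : (#|N u|%:R : R) != 0 by rewrite pnatr_eq0 -lt0n.
rewrite -mulr_suml.
have -> : \sum_(v | v \notin N d) ((v \in N u)%:R : R) = #|N u :\: N d|%:R.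
  rewrite (eq_bigr (fun v => if v \in N u then 1 else 0)); last by move=> v _; case: (v \in N u).
  rewrite -big_mkcondr /=.
  have -> : #|N u :\: N d| = #|[pred v | (v \notin N d) && (v \in N u)]|.
    by apply: eq_card => v; rewrite !inE.
  by rewrite -sumr_const.
have := hov d u; rewrite finset.setIC.
have := cardsID (N d) (N u); move: cu'.
set n := #|N u|; set c1 := #|N u :&: N d|; set c2 := #|N u :\: N d|.
move=> cu' hc hp'.
have -> : (c2%:R : R) = n%:R - c1%:R by rewrite -hc natrD [c1%:R + _]addrC addrK.
by rewrite mulrBl divff // lerD2l lerN2.
Qed.


Lemma step_sum d x a b s :
  \sum_(e : bool * bool * V | e.2 \notin N d)
     wf_step_weight N eps qbar d (xe x s e.2) (ae a s e.1.1) (ae b s e.1.2) s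
  <= 1 - p.
Proof.
set u := x s; set pN := wf_p qbar eps (nvisits N x d s).
set cnd := (u \in N d) && not_home a b s.
set wA := fun c : bool => if cnd then (if c then pN else 1 - pN) else (if c then 0 else 1).
set wB := fun c : bool => if c then 1 - eps else eps.
set r := \sum_(v | v \notin N d) ((v \in N u)%:R / #|N u|%:R : R).
have sS : (s == s.+1) = false by apply: ltn_eqF.
have E : forall e : bool * bool * V,
  wf_step_weight N eps qbar d (xe x s e.2) (ae a s e.1.1) (ae b s e.1.2) s =
  wA e.1.1 * wB e.1.2 * (if e.1.1 && e.1.2 then (e.2 == d)%:R
                         else (e.2 \in N u)%:R / #|N u|%:R).
  move=> [[c1 c2] v] /=; rewrite /wf_step_weight.
  have -> : nvisits N (xe x s v) d s = nvisits N x d s.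
    apply: nv_congr => t ts; rewrite /xe ifF //.
    by apply: ltn_eqF; rewrite ltnS.
  have -> : not_home (ae a s c1) (ae b s c2) s = not_home a b s.
    rewrite /not_home; congr (~~ _); apply: eq_existsb => k.
    by rewrite /ae !ifF //; apply: ltn_eqF.
  by rewrite /xe /ae sS !eqxx.
rewrite (eq_bigr _ (fun e _ => E e)).
pose G := fun e : bool * bool * V => wA e.1.1 * wB e.1.2 *
  (if e.1.1 && e.1.2 then (e.2 == d)%:R else (e.2 \in N u)%:R / #|N u|%:R).
rewrite -/(G _).
have -> : \sum_(e | e.2 \notin N d) G e =
          \sum_(c : bool * bool) \sum_(v | v \notin N d) G (c, v).
  by rewrite pair_big_dep; apply: eq_big => [[c v]|[c v] _].
have H : forall c : bool * bool, \sum_(v | v \notin N d) G (c, v) =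
   wA c.1 * wB c.2 * (if c.1 && c.2 then 0 else r).
  move=> [c1 c2]; rewrite /G /= -mulr_sumr; congr (_ * _).
  case: (c1 && c2) => //; apply: big1 => v vd.
  by case: eqP => // vE; rewrite vE Nrefl in vd.
rewrite (eq_bigr _ (fun c _ => H c)).
rewrite -(pair_big xpredT xpredT (fun c1 c2 => wA c1 * wB c2 * (if c1 && c2 then 0 else r))) /=.
rewrite !big_bool /= /wA /wB.
have r0 : 0 <= r by apply: sumr_ge0 => v _; apply: divr_ge0.
have r1 : r <= 1 - p by apply: r_le1.
have pN0 : 0 <= pN by apply: wfp_ge0.
case/andP: heps => e0 e1.
have h3 : 0 <= pN * r * (1 - eps).
  by apply: mulr_ge0; [apply: mulr_ge0|rewrite subr_ge0 ltW].
have [->|->] : cnd = true \/ cnd = false by case: (cnd); auto.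
  lra.
lra.
Qed.

End W.

Section Prob2.
Variables (R : realType) (V : finType) (N : V -> {set V})
  (p eps qbar : R) (x0 : V)
  (dO : measure_display) (O : measurableType dO) (P : probability O R)
  (D : O -> V) (X : nat -> O -> V) (A B : nat -> O -> bool).
Hypothesis mD : forall v, measurable (D @^-1` [set v]%classic).
Hypothesis mX : forall t v, measurable (X t @^-1` [set v]%classic).
Hypothesis mA : forall t c, measurable (A t @^-1` [set c]%classic).
Hypothesis mB : forall t c, measurable (B t @^-1` [set c]%classic).
Hypothesis heps : 0 <= eps < 1.
Hypothesis hq : 0 < qbar.
Hypothesis Nrefl : forall v, v \in N v.
Hypothesis hov : neighborhood_overlap N p.
Hypothesis hp : 0 < p <= 1.
Hypothesis hP : forall n d x a b,
  P (@cyl V dO O D X A B n d x a b) = (wf_path_weight N eps qbar x0 d x a b n)%:E.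

Local Notation cyl := (@cyl V dO O D X A B).
Local Notation xe := (@xe V).
Local Open Scope ereal_scope.

Lemma cyl_bound s d x a b :
  P (cyl s d x a b `&` [set w | X s.+1 w \notin N (D w)]) <=
  (1 - p)%:E * P (cyl s d x a b).
Proof.
have E : cyl s d x a b `&` [set w | X s.+1 w \notin N (D w)] =
  \big[setU/set0]_(e <- index_enum (bool * bool * V)%type | e.2 \notin N d)
     cyl s.+1 d (xe x s e.2) (ae a s e.1.1) (ae b s e.1.2).
  apply/seteqP; split => w.
    move=> [[hd [hx hab]] hF]; apply/(@memU dO O); exists (A s w, B s w, X s.+1 w).
    split; first by rewrite mem_index_enum.
      by rewrite /= -hd.
    split => //; split.
      move=> t ht; rewrite /xe; case: eqP => [->//|ne]; apply: hx.
      by move: ht; rewrite leq_eqVlt => /orP[/eqP//|].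
    move=> t ht; rewrite /ae; case: eqP => [->//|ne]; apply: hab.
    by move: ht; rewrite ltnS leq_eqVlt => /orP[/eqP//|].
  move/(@memU dO O) => [] [[c1 c2] v] [] _ /= hv [] hd [] hx hab.
  have hv' : X s.+1 w = v by rewrite hx // /xe eqxx.
  split; last by rewrite /= hv' hd.
  split => //; split.
    move=> t ts; rewrite hx ?(leqW ts) // /xe ifF //.
    by apply: ltn_eqF; rewrite ltnS.
  move=> t ts; have [h1 h2] := hab t (ltnW ts).
  by rewrite h1 h2 /ae !ifF //; apply: ltn_eqF.
have Hd : forall e e' : (bool * bool * V)%type, e != e' ->
    cyl s.+1 d (xe x s e.2) (ae a s e.1.1) (ae b s e.1.2) `&`
    cyl s.+1 d (xe x s e'.2) (ae a s e'.1.1) (ae b s e'.1.2) = set0.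
  move=> [[c1 c2] v] [[c1' c2'] v'] ne; apply/seteqP; split => // w /=.
  move=> [[_ [hx hab]] [_ [hx' hab']]]; move: ne.
  have := hx s.+1 (leqnn _); have := hx' s.+1 (leqnn _).
  have [h1 h2] := hab s (ltnSn s); have [h1' h2'] := hab' s (ltnSn s).
  move: h1 h2 h1' h2'; rewrite /xe /ae !eqxx => -> -> -> -> -> ->.
  by rewrite eqxx.
have [_ PU] := @fadd R dO O P _ (index_enum (bool * bool * V)%type)
   (fun e => e.2 \notin N d)
   (fun e => cyl s.+1 d (xe x s e.2) (ae a s e.1.1) (ae b s e.1.2))
   (index_enum_uniq _) (fun e => @mcyl _ _ _ _ _ _ _ mD mX mA mB _ _ _ _ _) Hd.
rewrite E PU.
have W0 : (0 <= wf_path_weight N eps qbar x0 d x a b s)%R.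
  by rewrite -lee_fin -hP measure_ge0.
under eq_bigr do rewrite hP (@pw_ext R V N eps qbar x0).
rewrite sumEFin hP -EFinM lee_fin -mulr_sumr mulrC.

by apply: ler_wpM2r => //; apply: (@step_sum R V N p eps qbar heps hq Nrefl hov).
Qed.


Local Notation PQ := (@PQ R V x0 dO O P D X A B mD mX mA mB).

Lemma mQ n (Q : V -> (nat -> V) -> bool) :
  (forall d x y, (forall t, (t <= n)%N -> x t = y t) -> Q d x = Q d y) ->
  measurable [set w | Q (D w) (fun t => X t w)].
Proof.
by move=> Qc; have [h _] := PQ n Q setT Qc measurableT; rewrite setIT in h.
Qed.

Lemma mF s : measurable [set w | X s.+1 w \notin N (D w)].
Proof. by apply: (@mQ s.+1 (fun d x => x s.+1 \notin N d)) => d x y h; rewrite h. Qed.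

Lemma core s (Q : V -> (nat -> V) -> bool) :
  (forall d x y, (forall t, (t <= s)%N -> x t = y t) -> Q d x = Q d y) ->
  P ([set w | Q (D w) (fun t => X t w)] `&` [set w | X s.+1 w \notin N (D w)]) <=
  (1 - p)%:E * P [set w | Q (D w) (fun t => X t w)].
Proof.
move=> Qc.
have [_ ->] := PQ s Q _ Qc (mF s).
have := PQ s Q setT Qc measurableT; rewrite setIT => -[_ ->].
rewrite ge0_sume_distrr; last by move=> *; apply: measure_ge0.
apply: lee_sum => o _; rewrite setIT; exact: cyl_bound.
Qed.


Definition pr (S : set O) : R := fine (P S).
Lemma prE S : measurable S -> P S = (pr S)%:E.
Proof. by move=> mS; rewrite /pr fineK // fin_num_measure. Qed.

Lemma pr_ge0 S : (0 <= pr S)%R.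
Proof. by rewrite /pr fine_ge0. Qed.

Definition nvw w s := nvisits N (fun t => X t w) (D w) s.
Definition Eqs k s := [set w | nvw w s == k].
Definition Lts k s := [set w | (nvw w s < k)%N].
Definition Les k s := [set w | (nvw w s <= k)%N].
Definition Fs s := [set w | X s.+1 w \notin N (D w)].

Lemma mEqs k s : measurable (Eqs k s).
Proof.
apply: (@mQ s (fun d x => nvisits N x d s == k)) => d x y h.
by rewrite (@nv_congr V N x y d s h).
Qed.
Lemma mLts k s : measurable (Lts k s).
Proof.
apply: (@mQ s (fun d x => (nvisits N x d s < k)%N)) => d x y h.
by rewrite (@nv_congr V N x y d s h).
Qed.
Lemma mLes k s : measurable (Les k s).
Proof.
apply: (@mQ s (fun d x => (nvisits N x d s <= k)%N)) => d x y h.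
by rewrite (@nv_congr V N x y d s h).
Qed.

Lemma coreE k s : P (Eqs k s `&` Fs s) <= (1 - p)%:E * P (Eqs k s).
Proof.
apply: (@core s (fun d x => nvisits N x d s == k)) => d x y h.
by rewrite (@nv_congr V N x y d s h).
Qed.

Lemma teles k s : (pr (Les k s.+1) + p * pr (Eqs k s) <= pr (Les k s))%R.
Proof.
have e1 : Les k s.+1 = Lts k s `|` (Eqs k s `&` Fs s).
  apply/seteqP; split => w; rewrite /Les /Lts /Eqs /Fs /nvw /= nvS;
    case: (X s.+1 w \in N (D w)) => /=; rewrite ?addn1 ?addn0 ?andbT ?andbF.
  - by left.
  - by rewrite leq_eqVlt => /orP[/eqP->|]; [right; split|left].
  - by case => // -[].
  - by case => [/ltnW|[/eqP->]].
have d1 : Lts k s `&` (Eqs k s `&` Fs s) = set0.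
  apply/seteqP; split => // w [h1 [h2 _]]; move: h1 h2.
  by rewrite /Lts /Eqs /nvw /= => h1 /eqP h2; rewrite h2 ltnn in h1.
have e2 : Les k s = Lts k s `|` Eqs k s.
  apply/seteqP; split => w; rewrite /Les /Lts /Eqs /=.
    by rewrite leq_eqVlt => /orP[/eqP->|]; [right|left].
  by case => [/ltnW|/eqP->].
have d2 : Lts k s `&` Eqs k s = set0.
  apply/seteqP; split => // w [h1 h2]; move: h1 h2.
  by rewrite /Lts /Eqs /nvw /= => h1 /eqP h2; rewrite h2 ltnn in h1.
have c := coreE k s.
have h1 : P (Les k s.+1) = P (Lts k s) + P (Eqs k s `&` Fs s).
  by rewrite e1 measureU //; [exact: mLts|apply: measurableI; [exact: mEqs|exact: mF]].
have h2 : P (Les k s) = P (Lts k s) + P (Eqs k s).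
  by rewrite e2 measureU //; [exact: mLts|exact: mEqs].
move: h1 h2 c.
rewrite !prE; try exact: mLes; try exact: mLts; try exact: mEqs;
  try (apply: measurableI; [exact: mEqs|exact: mF]).
rewrite -!EFinD -EFinM lee_fin => -[h1] [h2] c.
move: hp => /andP[p0 p1]; lra.
Qed.


Lemma pr_le1 S : measurable S -> (pr S <= 1)%R.
Proof. by move=> mS; rewrite -lee_fin -prE // probability_le1. Qed.

Lemma sumEq k M : (\sum_(s < M) pr (Eqs k s) <= p^-1)%R.
Proof.
have p0 : (0 < p)%R by case/andP: hp.
have H : forall M, (pr (Les k M) + p * \sum_(s < M) pr (Eqs k s) <= 1)%R.
  elim=> [|m IH]; first by rewrite big_ord0 mulr0 addr0 pr_le1 //; exact: mLes.
  rewrite big_ord_recr /= mulrDr addrA.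
  have := teles k m; lra.
have h := H M; have h0 := pr_ge0 (Les k M).
have -> : (\sum_(s < M) pr (Eqs k s) = p^-1 * (p * \sum_(s < M) pr (Eqs k s)))%R.
  by rewrite mulrA mulVf ?mul1r // gt_eqF.
rewrite -[X in (_ <= X)%R]mulr1; apply: ler_wpM2l; first by rewrite invr_ge0 ltW.
lra.
Qed.

Lemma prLt j s : pr (Lts j s) = (\sum_(k < j) pr (Eqs k s))%R.
Proof.
elim: j => [|j IH].
  rewrite big_ord0 /pr.
  have -> : Lts 0 s = set0 by apply/seteqP; split => w //=.
  by rewrite measure0.
have e : Lts j.+1 s = Lts j s `|` Eqs j s.
  apply/seteqP; split => w; rewrite /Lts /Eqs /=.
    by rewrite ltnS leq_eqVlt => /orP[/eqP->|]; [right|left].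
  by case => [/ltnW //|/eqP->].
have d : Lts j s `&` Eqs j s = set0.
  apply/seteqP; split => // w [h1 h2]; move: h1 h2.
  by rewrite /Lts /Eqs /nvw /= => h1 /eqP h2; rewrite h2 ltnn in h1.
have h : P (Lts j.+1 s) = P (Lts j s) + P (Eqs j s).
  by rewrite e measureU //; [exact: mLts|exact: mEqs].
move: h; rewrite !prE; try exact: mLts; try exact: mEqs.
by rewrite -EFinD => -[->]; rewrite IH big_ord_recr.
Qed.

Definition Zs j := [set w | forall s, (nvw w s < j)%N].

Lemma mZs j : measurable (Zs j).
Proof.
have -> : Zs j = \bigcap_s Lts j s.
  by apply/seteqP; split=> [w h s _|w h s]; [exact: h|exact: h s I].
by apply: bigcapT_measurable => s; exact: mLts.
Qed.

Lemma prZ j : pr (Zs j) = 0%R.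
Proof.
have p0 : (0 < p)%R by case/andP: hp.
have H M : (M%:R * pr (Zs j) <= j%:R * p^-1)%R.
  have -> : (M%:R * pr (Zs j) = \sum_(s < M) pr (Zs j))%R.
    by rewrite sumr_const card_ord mulr_natl.
  apply: (@le_trans _ _ (\sum_(s < M) pr (Lts j s))%R).
    apply: ler_sum => s _; rewrite -lee_fin -!prE; try exact: mZs; try exact: mLts.
    apply: le_measure; rewrite ?inE; try exact: mZs; try exact: mLts.
    by move=> w /= h; apply: h.
  under eq_bigr do rewrite prLt.
  rewrite exchange_big /=.
  apply: (@le_trans _ _ (\sum_(k < j) p^-1)%R).
    by apply: ler_sum => k _; apply: sumEq.
  by rewrite sumr_const card_ord mulr_natl.
have z0 := pr_ge0 (Zs j).
move: z0; rewrite le_eqVlt => /orP[/eqP<-//|zp].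
have q0 : (0 <= j%:R * p^-1 / pr (Zs j))%R.
  apply: divr_ge0; last exact: ltW.
  by apply: mulr_ge0 => //; rewrite invr_ge0 ltW.
have := archi_boundP q0; set M := Num.Def.archi_bound _.
rewrite ltr_pdivrMr // => hM.
by have := H M; rewrite leNgt hM.
Qed.


Lemma int_mono (f g : O -> \bar R) : (forall x, 0 <= g x) -> (forall x, f x <= g x) ->
  \int[P]_x f x <= \int[P]_x g x.
Proof.
move=> g0 fg; rewrite integralE.
rewrite -[X in _ <= X]sube0; apply: leeB; last first.
  by apply: integral_ge0 => x _; exact: funeneg_ge0.
rewrite (ge0_integralTE _ (f := f^\+)); last by move=> x; exact: funepos_ge0.
rewrite (ge0_integralTE _ (f := g)) //.
apply: le_ereal_sup => _ [h hf <-]; exists h => // x.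
apply: (le_trans (hf x)); rewrite funeposE ge_max fg g0 //.
Qed.

Lemma final i : (1 <= i)%N ->
  \int[P]_w wf_Y R N (fun t => X t w) (D w) i <= (p^-1)%:E.
Proof.
move=> i1.
pose G s := Eqs i.-1 s `|` Zs i.-1.
have mG s : measurable (G s) by apply: measurableU; [exact: mEqs|exact: mZs].
have ind0 (S : set O) w : 0 <= ((\1_S w)%:E : \bar R).
  by rewrite lee_fin indicE; case: (_ \in _).
apply: (@le_trans _ _ (\int[P]_w \sum_(s <oo) ((\1_(G s) w)%:E : \bar R))).
  apply: int_mono.
    by move=> w; apply: nneseries_ge0 => n _ _; exact: ind0.
  move=> w; apply: (@Y_le R V N (fun t => X t w) (D w) i) => //.
    move=> s hs; rewrite indicE mem_set //; left.
    by rewrite /Eqs /nvw /= hs.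
  by move=> hZ s; rewrite indicE mem_set //; right => s'; exact: hZ.
rewrite integral_nneseries //; last first.
  by move=> n; apply/measurable_realfun.measurable_EFinP; exact: measurable_realfun.measurable_indic.
rewrite (eq_eseriesr (g := fun s => P (G s))); last first.
  by move=> s _; rewrite integral_indic // setIT.
have PG s : P (G s) <= (pr (Eqs i.-1 s))%:E.
  have h : P (G s) <= P (Eqs i.-1 s) + P (Zs i.-1).
    exact: (@measureU2 _ _ _ P _ _ (mEqs _ _) (mZs _)).
  by move: h; rewrite (@prE _ (mZs _)) prZ adde0 (@prE _ (mEqs _ _)).
apply: (@le_trans _ _ (\sum_(s <oo) (pr (Eqs i.-1 s))%:E)).
  by apply: lee_nneseries => // s _ _; exact: measure_ge0.
apply: lime_le.
  by apply: is_cvg_nneseries => n _ _; rewrite lee_fin pr_ge0.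
apply: nearW => M; rewrite sumEFin lee_fin big_mkord.
exact: sumEq.
Qed.

End Prob2.

Theorem lemma9 (R : realType) (V : finType) (N : V -> {set V})
  (p eps qbar : R) (x0 : V)
  (dΩ : measure_display) (Ω : measurableType dΩ) (P : probability Ω R)
  (D : Ω -> V) (X : nat -> Ω -> V) (A B : nat -> Ω -> bool) :
  (* finite connected undirected graph, closed neighborhoods *)
  (forall u v : V, (v \in N u) = (u \in N v)) ->
  (forall v : V, v \in N v) ->
  (forall u v : V, connect (nbhd_adj N) u v) ->
  (* Neighborhood Overlap with parameter p in (0,1] *)
  0 < p <= 1 -> neighborhood_overlap N p ->
  (* parameters of the model and of the Water-Filling Strategy *)
  0 <= eps < 1 -> 0 < qbar ->
  (* the random elements are measurable *)
  (forall v, measurable (D @^-1` [set v]%classic)) ->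
  (forall t v, measurable (X t @^-1` [set v]%classic)) ->
  (forall t c, measurable (A t @^-1` [set c]%classic)) ->
  (forall t c, measurable (B t @^-1` [set c]%classic)) ->
  (* (D, X, A, B) is generated by the Water-Filling Strategy from X_0 = x0 *)
  (forall (n : nat) (d : V) (x : nat -> V) (a b : nat -> bool),
     P [set w : Ω | D w = d /\ (forall t, (t <= n)%N -> X t w = x t) /\
                (forall t, (t < n)%N -> A t w = a t /\ B t w = b t)]
     = (wf_path_weight N eps qbar x0 d x a b n)%:E) ->
  forall i : nat, (1 <= i)%N ->
    (\int[P]_w wf_Y R N (fun t => X t w) (D w) i <= (p^-1)%:E)%E.
Proof.
move=> Nsym Nrefl Nconn hp hov heps hq mD mX mA mB hP i i1.
have := @final R V N p eps qbar x0 dΩ Ω P D X A B mD mX mA mB heps hq Nrefl hov hp.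
by move=> /(_ hP i i1).
Qed.
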